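(* Let $d>0$, let $I\subseteq\mathbb{R}$ be a nonempty, non-singleton interval with $\ell(I)\geq d$, and let $f: I\to\mathbb{R}$ be $d$-periodically increasing. Then there exists an increasing function $\widehat{f}: I\to\mathbb{R}$ such that $\sup_{x\in I}|f(x)-\widehat{f}(x)|\leq\frac{\mathscr{H}_d(f)}{2}$.
   Context: $\ell(I)$ denotes the length of $I$. A function $f: I\to\mathbb{R}$ is $d$-periodically increasing if $f(x)\leq f(y)$ for all $x,y\in I$ with $y-x\geq d$. For $x\in I$ let $\mathscr{H}_{x_d}(f)=\sup_{u,v\in[x,x+d]\cap I}|f(u)-f(v)|$, and $\mathscr{H}_d(f)=\sup_{x\in I}\mathscr{H}_{x_d}(f)$. *)

(* Defs.v *)
From HB Require Import structures.
From mathcomp Require Import all_boot all_order all_algebra.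
From mathcomp Require Import all_classical all_reals all_analysis.
Set Implicit Arguments. Unset Strict Implicit. Unset Printing Implicit Defensive.
Import Order.TTheory GRing.Theory Num.Theory.
Local Open Scope classical_set_scope.
Local Open Scope ring_scope.

Definition ell (R : realType) (I : set R) : \bar R :=
  (ereal_sup (EFin @` I) - ereal_inf (EFin @` I))%E.

Definition periodically_increasing (R : realType) (d : R) (I : set R)
  (f : R -> R) : Prop :=
  forall x y, I x -> I y -> d <= y - x -> f x <= f y.

Definition increasing_on (R : realType) (I : set R) (f : R -> R) : Prop :=
  forall x y, I x -> I y -> x <= y -> f x <= f y.

Definition Hxd (R : realType) (d : R) (I : set R) (f : R -> R) (x : R) : \bar R :=
  ereal_sup [set (`|f u - f v|)%:E | u in `[x, x + d] `&` I & v in `[x, x + d] `&` I].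

Definition Hd (R : realType) (d : R) (I : set R) (f : R -> R) : \bar R :=
  ereal_sup [set Hxd d I f x | x in I].

(* Main.v *)
Require Import Defs.
From HB Require Import structures.
From mathcomp Require Import all_boot all_order all_algebra.
From mathcomp Require Import all_classical all_reals all_analysis.
Import Order.TTheory GRing.Theory Num.Theory.
From mathcomp Require Import lra.
Local Open Scope classical_set_scope.
Local Open Scope ring_scope.

Theorem theorem3p3 (R : realType) (d : R) (I : set R) (f : R -> R) :
  0 < d ->
  is_interval I ->
  (exists a b, I a /\ I b /\ a < b) ->
  (d%:E <= ell I)%E ->
  periodically_increasing d I f ->
  exists fh : R -> R, increasing_on I fh /\
    (ereal_sup [set (`|f x - fh x|)%:E | x in I] <= Hd d I f / 2%:E)%E.
Proof.
move=> d0 _ [a [b [Ia [Ib ab]]]] _ pinc.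
have Hge : forall t x, I t -> I x -> t <= x -> x - t <= d ->
    ((`|f t - f x|)%:E <= Hd d I f)%E.
  move=> t x It Ix tx xtd.
  apply: (@le_trans _ _ (Hxd d I f t)).
    apply: ereal_sup_ubound; exists t.
      split => //=; rewrite in_itv /= lexx /= lerDl ltW //.
    exists x => //; split => //=; rewrite in_itv /= tx /= -lerBlDl //.
  by apply: ereal_sup_ubound; exists t.
case HH: (Hd d I f) => [H| |].
- have H0 : 0 <= H.
    have := Hge a a Ia Ia (lexx a); rewrite subrr ltW // HH subrr normr0 lee_fin.
    by apply.
  pose S x := [set f t | t in [set t | I t /\ t <= x]].
  have Sub : forall x, I x -> ubound (S x) (f x + H).
    move=> x Ix _ [t [It tx] <-].
    case: (lerP d (x - t)) => xt.
      by apply: le_trans (pinc _ _ It Ix xt) _; rewrite lerDl.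
    have := Hge t x It Ix tx (ltW xt); rewrite HH lee_fin => h.
    move: h; rewrite ler_norml => /andP[h1 h2]; lra.
  have Sn : forall x, I x -> S x !=set0.
    by move=> x Ix; exists (f x); exists x.
  have Sx : forall x, I x -> f x <= sup (S x).
    move=> x Ix; apply: ub_le_sup; first by exists (f x + H); apply: Sub.
    by exists x.
  have Sle : forall x, I x -> sup (S x) <= f x + H.
    by move=> x Ix; apply: ge_sup; [apply: Sn | apply: Sub].
  exists (fun x => sup (S x) - H / 2); split.
    move=> x y Ix Iy xy; rewrite lerD2r; apply: sup_le.
    - move=> _ [t [It tx] <-]; exists (f t); split => //; exists t => //.
      by split => //; apply: le_trans xy.
    - by apply: Sn.
    - by split; [apply: Sn | exists (f y + H); apply: Sub].
  apply: ge_ereal_sup => _ [x Ix <-].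
  rewrite inver pnatr_eq0 /= -EFinM lee_fin.

  have := Sx x Ix; have := Sle x Ix => h1 h2.
  rewrite ler_norml; apply/andP; split; lra.
- exists (fun _ => 0); split; first by move=> *; rewrite lexx.
  by rewrite gt0_mulye ?leey // inver pnatr_eq0 /= lte_fin invr_gt0.
- have := Hge a a Ia Ia (lexx a); rewrite subrr ltW // HH => /(_ erefl).
  by rewrite leNgt ltNye.
Qed.
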